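(* For integers $0\le k\le n$, \[ S_B[n,k]=\sum_{j=k}^n\binom{n}{j}[2]_q^{\,j-k}q^{\,j-k}\,S[j,k]_{q^2} \] and \[ S_B[n,k]=S_D[n,k]+n\cdot[2]_q^{\,n-k-1}q^{\,n-k-1}\,S[n-1,k]_{q^2} \] (when $n=0$ the last summand is $0$ because of the factor $n$).
   Context: $[k]_q=1+\dots+q^{k-1}$, $[0]_q=0$. Carlitz's $q$-Stirling numbers $S[n,k]$: $S[0,k]=\delta_{0k}$, $S[n,k]=S[n-1,k-1]+[k]_qS[n-1,k]$ for $n\ge1$; $S[n,k]_{q^2}$ is $S[n,k]$ with $q$ replaced by $q^2$ (and $S[n,k]=0$ for $k>n$ or $k<0$). $S_B[n,k]$: $S_B[0,k]=\delta_{0k}$, $S_B[n,k]=S_B[n-1,k-1]+[2k+1]_qS_B[n-1,k]$. For $S\subset\mathbb{Z}\setminus\{0\}$, $\overline{S}=\{-i:i\in S\}$, a standard signed partition (SSP) of $S$ with $k$ blocks is a sequence $(S_1,\dots,S_k)$ of disjoint nonempty subsets of $S\cup\overline{S}$ with $\{S_1,\dots,S_k,\overline{S_1},\dots,\overline{S_k}\}$ a partition of $S\cup\overline{S}$ and $\min|S_1|\le\dots\le\min|S_k|$ ($|S_i|=\{|j|:j\in S_i\}$). A PSSP of $S$ is an SSP of a (possibly empty) subset of $S$. $B(S,k)$, $B_{\subseteq}(S,k)$ are the sets of SSPs, PSSPs of $S$ with $k$ blocks, and $D_{\subseteq}([n],k)=B_{\subseteq}([n],k)\setminus\bigcup_{i=1}^nB([n]\setminus\{i\},k)$.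 For $\pi=(S_1,\dots,S_k)$, $\mathrm{pos}(\pi)=\#\{x\in\bigcup_iS_i:x>0\}$, $m(\pi)=2\sum_{i=1}^ki\cdot\#S_i-\mathrm{pos}(\pi)$. The type D $q$-Stirling numbers are $S_D[n,k]=\frac{1}{q^{k^2}[2]_q^k}\sum_{\pi\in D_{\subseteq}([n],k)}q^{m(\pi)}$. *)

(* Defs.v *)
From mathcomp Require Import all_boot all_order all_algebra.
Set Implicit Arguments. Unset Strict Implicit. Unset Printing Implicit Defensive.
Import GRing.Theory.
Local Open Scope ring_scope.

Section Defs.
Variable R : fieldType.

Definition qint (q : R) (k : nat) : R := \sum_(i < k) q ^+ i.

Fixpoint qS (q : R) (n k : nat) : R :=
  match n with
  | 0 => (k == 0%N)%:R
  | n'.+1 => (if k is k'.+1 then qS q n' k' else 0) + qint q k * qS q n' k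
  end.

Fixpoint qSB (q : R) (n k : nat) : R :=
  match n with
  | 0 => (k == 0%N)%:R
  | n'.+1 => (if k is k'.+1 then qSB q n' k' else 0) + qint q (2 * k + 1) * qSB q n' k
  end.
End Defs.

(* Signed elements of [n] u -[n]: (true, i) stands for +(i+1), (false, i) for -(i+1). *)
Definition sgn (n : nat) := (bool * 'I_n)%type.
Definition negs n (x : sgn n) : sgn n := (~~ x.1, x.2).
Definition negset n (A : {set sgn n}) : {set sgn n} := [set negs x | x in A].
Definition absn n (x : sgn n) : nat := (val x.2).+1.
Definition minabs n (A : {set sgn n}) : nat := \big[minn/n]_(x in A) absn x.

(* pi : 'I_k -> blocks, pi i = S_(i+1).
   is_ssp T k pi : pi is a standard signed partition of T (a subset of [n]) with k blocks. *)
Definition is_ssp n k (T : {set 'I_n}) (pi : {ffun 'I_k -> {set sgn n}}) : bool :=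
  [&& [forall i, pi i != set0],
      [forall i, forall j, (i != j) ==> [disjoint pi i & pi j]],
      [forall i, forall j, [disjoint pi i & negset (pi j)]],
      (\bigcup_i (pi i :|: negset (pi i)) == [set x : sgn n | x.2 \in T]) &
      [forall i : 'I_k, forall j : 'I_k, (i <= j)%N ==> (minabs (pi i) <= minabs (pi j))%N]].

Definition is_pssp n k (pi : {ffun 'I_k -> {set sgn n}}) : bool :=
  [exists T : {set 'I_n}, is_ssp T pi].

(* D_subseteq([n],k) = B_subseteq([n],k) minus the union of B([n]\{i},k) *)
Definition is_D n k (pi : {ffun 'I_k -> {set sgn n}}) : bool :=
  is_pssp pi && [forall i : 'I_n, ~~ is_ssp ([set: 'I_n] :\ i) pi].

Definition pos n k (pi : {ffun 'I_k -> {set sgn n}}) : nat :=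
  #|[set x : sgn n | x.1 & [exists i, x \in pi i]]|.

Definition mstat n k (pi : {ffun 'I_k -> {set sgn n}}) : nat :=
  (2 * (\sum_(i < k) (val i).+1 * #|pi i|) - pos pi)%N.

Definition SD (R : fieldType) (q : R) (n k : nat) : R :=
  (q ^+ (k * k) * (qint q 2) ^+ k)^-1 *
  \sum_(pi : {ffun 'I_k -> {set sgn n}} | is_D pi) q ^+ mstat pi.

(* Main.v *)
Require Import Defs.
From mathcomp Require Import all_boot all_order all_algebra.
From mathcomp Require Import zify ring.
Import GRing.Theory.

Module P1.
Import GRing.Theory.
Local Open Scope ring_scope.

Section Alg.
Variable R : fieldType.
Variable q : R.
Let a := q * qint q 2.

Lemma qintS (p : R) m : qint p m.+1 = qint p m + p ^+ m.
Proof. by rewrite /qint big_ord_recr. Qed.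

Lemma qint2 : qint q 2 = 1 + q.
Proof. by rewrite /qint big_ord_recr /= big_ord_recr big_ord0 /= add0r expr0 expr1. Qed.

Lemma qint_odd k : qint q (2 * k + 1) = 1 + a * qint (q ^+ 2) k.
Proof.
elim: k => [|k IH]; first by rewrite muln0 add0n qintS /qint !big_ord0 mulr0 add0r addr0 expr0.
have -> : (2 * k.+1 + 1 = (2 * k + 1).+2)%N by rewrite mulnS; lia.
rewrite !qintS IH /a qint2 -exprM.
have -> : (2 * k + 1).+1 = (2 * k).+2 by lia.
rewrite !exprS -addn1 exprD expr1; ring.
Qed.

Lemma qS_gt (p : R) m k : (m < k)%N -> qS p m k = 0.
Proof.
elim: m k => [|m IH] [|k] //= H.
by rewrite !IH ?mulr0 ?addr0 //; lia.
Qed.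

Definition Tn m k := \sum_(j < m.+1) 'C(m, j)%:R * a ^+ (j - k) * qS (q ^+ 2) j k.

Arguments qS : simpl never.
Lemma qSS (p : R) m k : qS p m.+1 k = (if k is k'.+1 then qS p m k' else 0) + qint p k * qS p m k.
Proof. by []. Qed.

Lemma Tn_rec m k : Tn m.+1 k =
  (if k is k'.+1 then Tn m k' else 0) + qint q (2 * k + 1) * Tn m k.
Proof.
rewrite /Tn big_ord_recl bin0.
have E0 : forall i : 'I_m.+1, 'C(m.+1, bump 0 i)%:R * a ^+ (bump 0 i - k) * qS (q ^+ 2) (bump 0 i) k
  = 'C(m, i.+1)%:R * a ^+ (i.+1 - k) * qS (q ^+ 2) i.+1 k + 'C(m, i)%:R * a ^+ (i.+1 - k) * qS (q ^+ 2) i.+1 k.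
  by move=> i; rewrite /bump /= add1n binS natrD !mulrDl.
under eq_bigr => j _ do rewrite E0.
rewrite big_split /= addrA.
have E1 : 1%:R * a ^+ (0 - k) * qS (q ^+ 2) 0 k +
   \sum_(i < m.+1) 'C(m, i.+1)%:R * a ^+ (i.+1 - k) * qS (q ^+ 2) i.+1 k
   = \sum_(j < m.+1) 'C(m, j)%:R * a ^+ (j - k) * qS (q ^+ 2) j k.
  rewrite [RHS]big_ord_recl bin0; congr (_ + _).
  rewrite big_ord_recr /= bin_small // mul0r mul0r addr0.
  by apply: eq_bigr => i _ /=; rewrite /bump /= add1n.
rewrite E1 qint_odd mulrDl mul1r [RHS]addrCA; congr (_ + _); clear E0 E1.
have E2 : forall j : 'I_m.+1, 'C(m, j)%:R * a ^+ (j.+1 - k) * qS (q ^+ 2) j.+1 k =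
   (if k is k'.+1 then 'C(m, j)%:R * a ^+ (j - k') * qS (q ^+ 2) j k' else 0)
   + a * qint (q ^+ 2) k * ('C(m, j)%:R * a ^+ (j - k) * qS (q ^+ 2) j k).
  move=> j; rewrite qSS.
  case: (ltnP (val j) k) => Hjk.
    rewrite [qS _ j k]qS_gt // !mulr0 addr0.
    case: k Hjk => [|k] Hjk /=; first by rewrite mulr0 addr0.
    by rewrite subSS addr0.
  rewrite mulrDr; congr (_ + _).
    by case: k Hjk => [|k] Hjk //=; rewrite ?subSS // mulr0.
  rewrite (subSn Hjk) exprS; ring.
under eq_bigr => j _ do rewrite E2.
rewrite big_split /= -mulr_sumr; congr (_ + _).
by case: k {E2}; rewrite ?big1.
Qed.

Lemma qSB_Tn m k : qSB q m k = Tn m k.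
Proof.
elim: m k => [|m IH] k.
  rewrite /Tn big_ord_recr big_ord0 /= add0r bin0 mul1r.
  by rewrite sub0n expr0 mul1r.
by rewrite Tn_rec -!IH; case: k => [|k] //; rewrite -IH.
Qed.

End Alg.

End P1.
Import P1.

Module P2.
Import GRing.Theory.
Set Implicit Arguments. Unset Strict Implicit. Unset Printing Implicit Defensive.

Section Comb.
Variable n : nat.
Implicit Types (A B : {set sgn n}) (T : {set 'I_n}).

Lemma mem_negset A y : (y \in negset A) = (negs y \in A).
Proof.
have K : cancel (@negs n) (@negs n) by case=> b i; rewrite /negs /= negbK.
by rewrite /negset (can_imset_pre _ K) inE.
Qed.

Lemma disjointP (T0 : finType) (C D : {set T0}) :
  reflect (forall x, x \in C -> x \in D -> False) [disjoint C & D].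
Proof.
apply: (iffP idP) => [H x xC xD | H]; first by rewrite (disjointFr H xC) in xD.
apply/pred0P => x /=; apply/negP => /andP [xC xD]; exact: H x xC xD.
Qed.

Lemma absn_le (y : sgn n) : (absn y <= n)%N.
Proof. exact: ltn_ord. Qed.

Lemma bigmin_le (I : eqType) (r : seq I) (P : pred I) (F : I -> nat) m y :
  y \in r -> P y -> (\big[minn/m]_(x <- r | P x) F x <= F y)%N.
Proof.
elim: r => // c r IH; rewrite inE big_cons => /orP [/eqP <-|yr] Py.
  by rewrite Py geq_minl.
case: (P c); last exact: IH.
exact: leq_trans (geq_minr _ _) (IH yr Py).
Qed.

Lemma minabs_le A y : y \in A -> (minabs A <= absn y)%N.
Proof. by move=> yA; rewrite /minabs; apply: bigmin_le => //; exact: mem_index_enum. Qed.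

Lemma minabs_ge A m : (m <= n)%N -> (forall y, y \in A -> m <= absn y)%N -> (m <= minabs A)%N.
Proof.
move=> mn H; rewrite /minabs; elim/big_ind: _ => //.
  by move=> u v Hu Hv; rewrite leq_min Hu Hv.
Qed.

Lemma minabs_mono A B : (forall b, b \in B -> exists2 a, a \in A & (absn a <= absn b)%N) ->
  (minabs A <= minabs B)%N.
Proof.
move=> H; apply: minabs_ge.
  rewrite /minabs; elim/big_ind: _ => //; first by move=> u v Hu Hv; rewrite geq_min Hu.
  by move=> i _; exact: absn_le.
move=> b /H [c cA le]; exact: leq_trans (minabs_le cA) le.
Qed.

Lemma minabs_eq A B : (forall b, b \in B -> exists2 a, a \in A & (absn a <= absn b)%N) ->
  (forall a, a \in A -> exists2 b, b \in B & (absn b <= absn a)%N) -> minabs A = minabs B.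
Proof. by move=> H1 H2; apply/eqP; rewrite eqn_leq !minabs_mono. Qed.

Lemma minabs1 (y : sgn n) : minabs [set y] = absn y.
Proof.
apply/eqP; rewrite eqn_leq minabs_le ?set11 //.
by apply: minabs_ge; [exact: absn_le | move=> z /set1P ->].
Qed.

Definition ssp_spec (k : nat) T (pi : {ffun 'I_k -> {set sgn n}}) :=
 [/\ forall i, pi i != set0,
     forall i j y, y \in pi i -> y \in pi j -> i = j,
     forall i j y, y \in pi i -> negs y \in pi j -> False,
     (forall i y, y \in pi i -> y.2 \in T) /\ (forall e, e \in T -> exists i s, (s, e) \in pi i)
   & forall i j : 'I_k, (i <= j)%N -> (minabs (pi i) <= minabs (pi j))%N].

Lemma sspP k T (pi : {ffun 'I_k -> {set sgn n}}) : reflect (ssp_spec T pi) (is_ssp T pi).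
Proof.
apply: (iffP and5P) => [[/forallP H1 /forallP H2 /forallP H3 /eqP H4 /forallP H5] | [H1 H2 H3 [H4 H4'] H5]].
  split => //.
  - move=> i j y yi yj; apply/eqP; apply/negPn/negP => ij.
    move: (H2 i) => /forallP /(_ j); rewrite ij /= => /disjointP /(_ y yi).
    by apply.
  - move=> i j y yi yj; move: (H3 i) => /forallP /(_ j) /disjointP /(_ y yi).
    by rewrite mem_negset; apply.
  - split.
      move=> i y yi; have : y \in [set x : sgn n | x.2 \in T].
        by rewrite -H4; apply/bigcupP; exists i => //; rewrite inE yi.
      by rewrite inE.
    move=> e eT; have : (true, e) \in [set x : sgn n | x.2 \in T] by rewrite inE.
    rewrite -H4 => /bigcupP [i _]; rewrite inE mem_negset => /orP [] yi.
      by exists i, true.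
    by exists i, false.
  - by move=> i j ij; move: (H5 i) => /forallP /(_ j) /implyP; apply.
split.
- by apply/forallP.
- apply/forallP => i; apply/forallP => j; apply/implyP => ij.
  apply/disjointP => y yi yj; move: ij; by rewrite (H2 _ _ _ yi yj) eqxx.
- apply/forallP => i; apply/forallP => j; apply/disjointP => y yi.
  by rewrite mem_negset => /(H3 _ _ _ yi).
- apply/eqP/setP => y; rewrite inE; apply/bigcupP/idP.
    case=> i _; rewrite inE mem_negset => /orP [] /H4 //.
  case: y => b e /= eT; have [i [s se]] := H4' e eT; exists i => //.
  rewrite inE mem_negset; case: b; case: s se => se; by rewrite /negs /= se ?orbT.
- apply/forallP => i; apply/forallP => j; apply/implyP; exact: H5.
Qed.


Lemma card_bigcup_le (I : finType) (F : I -> {set sgn n}) :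
  (#|\bigcup_i F i| <= \sum_i #|F i|)%N.
Proof.
apply: (big_ind2 (fun (A : {set sgn n}) m => #|A| <= m)%N) => //.
  by rewrite cards0.
move=> A1 m1 A2 m2 H1 H2; rewrite cardsU.
exact: leq_trans (leq_subr _ _) (leq_add H1 H2).
Qed.

Definition sumw k (pi : {ffun 'I_k -> {set sgn n}}) := (\sum_(i < k) (val i).+1 * #|pi i|)%N.

Lemma pos_le k (pi : {ffun 'I_k -> {set sgn n}}) : (pos pi <= sumw pi)%N.
Proof.
rewrite /pos; apply: (@leq_trans #|\bigcup_i pi i|).
  apply: subset_leq_card; apply/subsetP => y; rewrite inE => /andP [_ /existsP [i yi]].
  by apply/bigcupP; exists i.
apply: leq_trans (card_bigcup_le pi) _.
by apply: leq_sum => i _; rewrite mulSn leq_addr.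
Qed.

Lemma mstatE k (pi : {ffun 'I_k -> {set sgn n}}) : mstat pi = (2 * sumw pi - pos pi)%N.
Proof. by []. Qed.

Lemma sgnE (y : sgn n) : y = (y.1, y.2).
Proof. by case: y. Qed.

Section Step.
Variables (T : {set 'I_n}) (x : 'I_n).
Hypothesis xT : x \in T.
Hypothesis xmax : forall e, e \in T -> (val e <= val x)%N.
Let T' := T :\ x.

Lemma inT' e : (e \in T') = (e != x) && (e \in T).
Proof. by rewrite /T' !inE. Qed.

Lemma spec_x k (pi : {ffun 'I_k -> {set sgn n}}) : ssp_spec T' pi ->
  forall j y, y \in pi j -> y.2 != x.
Proof. by case=> _ _ _ [H4 _] _ j y /H4; rewrite inT' => /andP []. Qed.

Lemma spec_T k T0 (pi : {ffun 'I_k -> {set sgn n}}) : ssp_spec T0 pi ->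
  forall j y, y \in pi j -> y.2 \in T0.
Proof. by case=> _ _ _ [H4 _] _ j y /H4. Qed.

Lemma absn_T (y : sgn n) : y.2 \in T -> (absn y <= (val x).+1)%N.
Proof. by move=> /xmax; rewrite /absn ltnS. Qed.

Lemma absn_x (b : bool) : absn (b, x) = (val x).+1.
Proof. by []. Qed.

Definition hB k (pi : {ffun 'I_k -> {set sgn n}}) (p : 'I_k * bool) : {ffun 'I_k -> {set sgn n}} :=
  [ffun j => if j == p.1 then (p.2, x) |: pi j else pi j].

Lemma mem_hB k pi (p : 'I_k * bool) j y :
  (y \in hB pi p j) = ((j == p.1) && (y == (p.2, x))) || (y \in pi j).
Proof. by rewrite ffunE; case: eqP => _; rewrite ?inE. Qed.

Definition remB k (pi : {ffun 'I_k -> {set sgn n}}) : {ffun 'I_k -> {set sgn n}} :=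
  [ffun j => pi j :\ (true, x) :\ (false, x)].

Lemma mem_remB k (pi : {ffun 'I_k -> {set sgn n}}) j y :
  (y \in remB pi j) = (y.2 != x) && (y \in pi j).
Proof.
rewrite ffunE !inE; case: y => b e /=; rewrite !xpair_eqE.
by case: b; case: (e == x).
Qed.

Definition caseA k (pi : {ffun 'I_k.+1 -> {set sgn n}}) :=
  (pi ord_max == [set (true, x)]) || (pi ord_max == [set (false, x)]).

Lemma caseA_set1 k (pi : {ffun 'I_k.+1 -> {set sgn n}}) b :
  pi ord_max = [set (b, x)] -> caseA pi.
Proof. by rewrite /caseA => ->; case: b; rewrite eqxx ?orbT. Qed.

Definition ixB k (pi : {ffun 'I_k.+1 -> {set sgn n}}) : 'I_k.+1 :=
  odflt ord0 [pick i | ((true, x) \in pi i) || ((false, x) \in pi i)].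

Definition h'B k (pi : {ffun 'I_k.+1 -> {set sgn n}}) :=
  (remB pi, (ixB pi, (true, x) \in pi (ixB pi))).

Lemma hB_spec k (pi : {ffun 'I_k -> {set sgn n}}) p :
  ssp_spec T' pi -> ssp_spec T (hB pi p).
Proof.
move=> S; have Sx := spec_x S; have ST := spec_T S.
case: S => H1 H2 H3 [H4 H4'] H5; split.
- move=> j; have /set0Pn [z zj] := H1 j; apply/set0Pn; exists z.
  by rewrite mem_hB zj orbT.
- move=> i j y; rewrite !mem_hB => /orP [/andP [/eqP Ei /eqP Ey]|yi] /orP [/andP [/eqP Ej /eqP Ey']|yj].
  + by rewrite Ei Ej.
  + by move: (Sx _ _ yj); rewrite Ey eqxx.
  + by move: (Sx _ _ yi); rewrite Ey' eqxx.
  + exact: H2 yi yj.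
- move=> i j y; rewrite !mem_hB => /orP [/andP [_ /eqP Ey]|yi] /orP [/andP [_ /eqP Ey']|yj].
  + by move: Ey'; rewrite Ey /negs; case: (p.2).
  + by move: (Sx _ _ yj); rewrite Ey eqxx.
  + by move: (Sx _ _ yi); move: Ey'; rewrite (sgnE y) /negs /=; case=> _ ->; rewrite eqxx.
  + exact: H3 yi yj.
- split.
    move=> j y; rewrite mem_hB => /orP [/andP [_ /eqP ->] //| /H4].
    by rewrite inT' => /andP [].
  move=> e eT; case: (eqVneq e x) => [->|ex].
    by exists p.1, p.2; rewrite mem_hB !eqxx.
  have eT' : e \in T' by rewrite inT' ex eT.
  have [i [s se]] := H4' e eT'.
  by exists i, s; rewrite mem_hB se orbT.
- have Em : forall j, minabs (hB pi p j) = minabs (pi j).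
    move=> j; apply: minabs_eq.
      by move=> b bj; exists b => //; rewrite mem_hB bj orbT.
    move=> a; rewrite mem_hB => /orP [/andP [_ /eqP ->]|aj]; last by exists a.
    have /set0Pn [z zj] := H1 j; exists z => //.
    rewrite absn_x; apply: absn_T.
    by move: (H4 _ _ zj); rewrite inT' => /andP [].
  by move=> i j ij; rewrite !Em; apply: H5.
Qed.


Lemma hB_notA k (pi : {ffun 'I_k.+1 -> {set sgn n}}) p :
  ssp_spec T' pi -> ~~ caseA (hB pi p).
Proof.
move=> S; have Sx := spec_x S; case: S => H1 _ _ _ _.
have /set0Pn [z zj] := H1 ord_max.
have zh : z \in hB pi p ord_max by rewrite mem_hB zj orbT.
have NA : forall b, hB pi p ord_max != [set (b, x)].
  move=> b; apply/negP => /eqP E; move: zh; rewrite E => /set1P Ez.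
  by move: (Sx _ _ zj); rewrite Ez eqxx.
by rewrite /caseA negb_or !NA.
Qed.

Lemma hB_K k (pi : {ffun 'I_k.+1 -> {set sgn n}}) p :
  ssp_spec T' pi -> h'B (hB pi p) = (pi, p).
Proof.
move=> S; have Sx := spec_x S.
have Nx : forall j b, ((b, x) \in pi j) = false.
  by move=> j b; apply/negP => /Sx; rewrite eqxx.
have ER : remB (hB pi p) = pi.
  apply/ffunP => j; apply/setP => y; rewrite mem_remB mem_hB.
  case yj: (y \in pi j); first by rewrite orbT (Sx _ _ yj).
  rewrite orbF; case: (y =P (p.2, x)) => [->|]; first by rewrite eqxx.
  by rewrite !andbF.
have EI : ixB (hB pi p) = p.1.
  rewrite /ixB; case: pickP => [i|] /=.
    rewrite !mem_hB !Nx !orbF => /orP [] /andP [/eqP -> _] //.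
  move=> /(_ p.1); rewrite !mem_hB !Nx !orbF eqxx /=.
  by case: (p.2); rewrite eqxx // orbT.
rewrite /h'B ER EI mem_hB Nx orbF eqxx /= xpair_eqE eqxx andbT.
by case: p {EI ER} => i [].
Qed.

Lemma goodB k (pi : {ffun 'I_k.+1 -> {set sgn n}}) :
  ssp_spec T pi -> ~~ caseA pi -> forall j, exists2 w, w \in pi j & w.2 != x.
Proof.
move=> S NA j; have ST := spec_T S; case: S => H1 H2 H3 _ H5.
case: (boolP [exists w in pi j, w.2 != x]) => [/existsP [w /andP [wj wx]]|]; first by exists w.
rewrite negb_exists => /forallP Hall.
have allx : forall w, w \in pi j -> w.2 = x.
  by move=> w wj; move: (Hall w); rewrite wj /= negbK => /eqP.
have /set0Pn [z zj] := H1 j.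
have Ez : z = (z.1, x) by rewrite {1}(sgnE z) allx.
have E1 : pi j = [set (z.1, x)].
  apply/setP => w; rewrite inE; apply/idP/eqP => [wj|->]; last by rewrite -Ez.
  rewrite (sgnE w) allx //; congr (_, _).
  apply/eqP; apply/negPn/negP => ne.
  apply: (H3 j j w wj); rewrite /negs.
  have -> : (~~ w.1, w.2) = z by rewrite Ez allx //; congr (_, _); by case: (w.1) (z.1) ne => [] [].
  done.
have Ej : j = ord_max.
  apply/eqP; rewrite -(inj_eq val_inj) /= eqn_leq -ltnS ltn_ord /=.
  apply/negP => /negP; rewrite -ltnNge => jlt.
  have le := H5 j ord_max (ltnW jlt).
  rewrite E1 minabs1 absn_x in le.
  have /set0Pn [u um] := H1 ord_max.
  have ux : u.2 = x.
    apply: val_inj; apply/eqP; rewrite eqn_leq xmax ?(ST _ _ um) //=.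
    by move: (leq_trans le (minabs_le um)); rewrite /absn ltnS.
  case: (eqVneq u.1 z.1) => [e1|ne].
    have uj : u \in pi j by rewrite E1 (sgnE u) e1 ux set11.
    by move: (H2 _ _ _ uj um) => E; move: jlt; rewrite E ltnn.
  apply: (H3 ord_max j u um); rewrite E1 /negs ux; apply/set1P; congr (_, _).
  by case: (u.1) (z.1) ne => [] [].
by move: NA; rewrite (caseA_set1 (b := z.1)) // -Ej.
Qed.


Lemma remB_spec k (pi : {ffun 'I_k.+1 -> {set sgn n}}) :
  ssp_spec T pi -> ~~ caseA pi -> ssp_spec T' (remB pi).
Proof.
move=> S NA; have G := goodB S NA; have ST := spec_T S.
case: S => H1 H2 H3 [H4 H4'] H5; split.
- move=> j; have [w wj wx] := G j; apply/set0Pn; exists w.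
  by rewrite mem_remB wx.
- by move=> i j y; rewrite !mem_remB => /andP [_ yi] /andP [_ yj]; exact: H2 yi yj.
- by move=> i j y; rewrite !mem_remB => /andP [_ yi] /andP [_ yj]; exact: H3 yi yj.
- split.
    by move=> j y; rewrite mem_remB inT' => /andP [-> /H4].
  move=> e; rewrite inT' => /andP [ex eT]; have [i [s se]] := H4' e eT.
  by exists i, s; rewrite mem_remB ex.
- have Em : forall j, minabs (remB pi j) = minabs (pi j).
    move=> j; apply: minabs_eq; last first.
      by move=> a; rewrite mem_remB => /andP [_ aj]; exists a.
    move=> b bj; case: (eqVneq b.2 x) => [bx|bx]; last by exists b; rewrite // mem_remB bx.
    have [w wj wx] := G j; exists w; first by rewrite mem_remB wx.
    by rewrite /absn bx ltnS xmax // (ST _ _ wj).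
  by move=> i j ij; rewrite !Em; apply: H5.
Qed.

Lemma hB_rem k (pi : {ffun 'I_k.+1 -> {set sgn n}}) :
  ssp_spec T pi -> hB (h'B pi).1 (h'B pi).2 = pi.
Proof.
case=> H1 H2 H3 [H4 H4'] H5.
have [i0 [s0 Hs0]] := H4' x xT.
rewrite /h'B /=; set i := ixB pi; set s := (true, x) \in pi i.
have Hi : ((true, x) \in pi i) || ((false, x) \in pi i).
  rewrite /i /ixB; case: pickP => [j //|/(_ i0) /=].
  by case: s0 Hs0 => ->; rewrite ?orbT.
have Hsi : (s, x) \in pi i.
  by rewrite /s; case E: ((true, x) \in pi i); rewrite // -E; move: Hi; rewrite E.
apply/ffunP => j; apply/setP => y; rewrite mem_hB mem_remB /=.
case: (eqVneq y.2 x) => [yx|yx] /=; last first.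
  case: (y =P (s, x)) => [Ey|]; last by rewrite andbF.
  by move: yx; rewrite Ey eqxx.
rewrite (sgnE y) yx xpair_eqE eqxx andbT.
case: (eqVneq j i) => [->|ji] /=.
  case: (eqVneq y.1 s) => [->|ne]; first by rewrite Hsi.
  rewrite orbF; symmetry; apply/negbTE/negP => yin; apply: (H3 i i _ yin); rewrite /negs /=.
  by move: Hsi; case: (y.1) (s) ne => [] [].
symmetry; apply/negbTE/negP => yin.
case: (eqVneq y.1 s) => [e|ne].
  by move: yin; rewrite e => /(H2 _ _ _ Hsi) E; move: ji; rewrite E eqxx.
apply: (H3 j i _ yin); rewrite /negs /=.
by move: Hsi; case: (y.1) (s) ne => [] [].
Qed.


Lemma sumw_hB k (pi : {ffun 'I_k -> {set sgn n}}) p :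
  ssp_spec T' pi -> sumw (hB pi p) = (sumw pi + (val p.1).+1)%N.
Proof.
move=> S; have Sx := spec_x S.
rewrite /sumw (bigD1 p.1) //= [in RHS](bigD1 p.1) //= ffunE eqxx cardsU1.
have -> : (p.2, x) \notin pi p.1 by apply/negP => /Sx; rewrite eqxx.
rewrite (eq_bigr (fun j : 'I_k => (val j).+1 * #|pi j|))%N; last first.
  by move=> j /negbTE jp; rewrite ffunE jp.
by rewrite add1n mulnS [RHS]addnC addnA.
Qed.

Lemma exists_hB k (pi : {ffun 'I_k -> {set sgn n}}) p y :
  [exists i, y \in hB pi p i] = [exists i, y \in pi i] || (y == (p.2, x)).
Proof.
apply/existsP/orP => [[i]|[/existsP [i yi]|/eqP ->]].
- by rewrite mem_hB => /orP [/andP [_ ->]|yi]; [right | left; apply/existsP; exists i].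
- by exists i; rewrite mem_hB yi orbT.
- by exists p.1; rewrite mem_hB !eqxx.
Qed.

Lemma pos_hB k (pi : {ffun 'I_k -> {set sgn n}}) p :
  ssp_spec T' pi -> pos (hB pi p) = (pos pi + p.2)%N.
Proof.
move=> S; have Sx := spec_x S; rewrite /pos.
have N : [exists i, (true, x) \in pi i] = false.
  by apply/negbTE; rewrite negb_exists; apply/forallP => i; apply/negP => /Sx; rewrite eqxx.
case E: p.2.
  have -> : [set y : sgn n | y.1 & [exists i, y \in hB pi p i]] =
            (true, x) |: [set y : sgn n | y.1 & [exists i, y \in pi i]].
    apply/setP => y; rewrite !inE exists_hB E.
    by case: (y =P (true, x)) => [->|_]; rewrite ?N ?orbF ?andbT.
  by rewrite cardsU1 inE N addn1 add1n.
have -> : [set y : sgn n | y.1 & [exists i, y \in hB pi p i]] =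
          [set y : sgn n | y.1 & [exists i, y \in pi i]].
  apply/setP => y; rewrite !inE exists_hB E.
  by case: (y =P (false, x)) => [->|_]; rewrite ?orbF.
by rewrite addn0.
Qed.

Lemma mstat_hB k (pi : {ffun 'I_k -> {set sgn n}}) p :
  ssp_spec T' pi -> mstat (hB pi p) = (mstat pi + (2 * (val p.1).+1 - p.2))%N.
Proof.
move=> S; rewrite !mstatE sumw_hB // pos_hB //.
have := pos_le pi; case: (p.2) => /=; lia.
Qed.

Definition hA k (pi : {ffun 'I_k -> {set sgn n}}) (s : bool) : {ffun 'I_k.+1 -> {set sgn n}} :=
  [ffun i => if unlift ord_max i is Some j then pi j else [set (s, x)]].

Definition h'A k (pi : {ffun 'I_k.+1 -> {set sgn n}}) :=
  ([ffun j => pi (lift ord_max j)], (true, x) \in pi ord_max).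

Lemma hA_max k (pi : {ffun 'I_k -> {set sgn n}}) s : hA pi s ord_max = [set (s, x)].
Proof. by rewrite ffunE unlift_none. Qed.

Lemma hA_lift k (pi : {ffun 'I_k -> {set sgn n}}) s j : hA pi s (lift ord_max j) = pi j.
Proof. by rewrite ffunE liftK. Qed.

Lemma hA_K k (pi : {ffun 'I_k -> {set sgn n}}) s : h'A (hA pi s) = (pi, s).
Proof.
rewrite /h'A hA_max inE xpair_eqE eqxx andbT (_ : (true == s) = s); last by case: s.
by congr (_, _); apply/ffunP => j; rewrite ffunE hA_lift.
Qed.

Lemma hA_rem k (pi : {ffun 'I_k.+1 -> {set sgn n}}) :
  caseA pi -> hA (h'A pi).1 (h'A pi).2 = pi.
Proof.
move=> A; apply/ffunP => i; case: (unliftP ord_max i) => [j|] ->.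
  by rewrite hA_lift ffunE.
rewrite hA_max /=; case/orP: A => /eqP ->; rewrite inE ?eqxx //.
Qed.

Lemma hA_caseA k (pi : {ffun 'I_k -> {set sgn n}}) s : caseA (hA pi s).
Proof. exact: (caseA_set1 (hA_max pi s)). Qed.


Lemma val_lift_max k (j : 'I_k) : val (lift ord_max j) = val j.
Proof. exact: lift_max. Qed.

Lemma hA_spec k (pi : {ffun 'I_k -> {set sgn n}}) s :
  ssp_spec T' pi -> ssp_spec T (hA pi s).
Proof.
move=> S; have Sx := spec_x S.
case: S => H1 H2 H3 [H4 H4'] H5; split.
- move=> i; case: (unliftP ord_max i) => [i'|] ->; rewrite ?hA_lift ?hA_max //.
  by apply/set0Pn; exists (s, x); rewrite set11.
- move=> i j y; case: (unliftP ord_max i) => [i'|] ->; rewrite ?hA_lift ?hA_max;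
  case: (unliftP ord_max j) => [j'|] ->; rewrite ?hA_lift ?hA_max //.
  + by move=> yi yj; rewrite (H2 _ _ _ yi yj).
  + by move=> yi /set1P Ey; move: (Sx _ _ yi); rewrite Ey eqxx.
  + by move=> /set1P Ey yj; move: (Sx _ _ yj); rewrite Ey eqxx.
- move=> i j y; case: (unliftP ord_max i) => [i'|] ->; rewrite ?hA_lift ?hA_max;
  case: (unliftP ord_max j) => [j'|] ->; rewrite ?hA_lift ?hA_max //.
  + exact: H3.
  + by move=> yi /set1P Ey; move: (Sx _ _ yi); rewrite (sgnE y) /negs in Ey *; case: Ey => _ ->; rewrite eqxx.
  + by move=> /set1P -> yj; move: (Sx _ _ yj); rewrite eqxx.
  + by move=> /set1P -> /set1P; rewrite /negs; case: s.
- split.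
    move=> i y; case: (unliftP ord_max i) => [i'|] ->; rewrite ?hA_lift ?hA_max.
      by move=> /H4; rewrite inT' => /andP [].
    by move=> /set1P ->.
  move=> e eT; case: (eqVneq e x) => [->|ex].
    by exists ord_max, s; rewrite hA_max set11.
  have eT' : e \in T' by rewrite inT' ex eT.
  have [i [b se]] := H4' e eT'.
  by exists (lift ord_max i), b; rewrite hA_lift.
- move=> i j; case: (unliftP ord_max i) => [i'|] ->; rewrite ?hA_lift ?hA_max;
  case: (unliftP ord_max j) => [j'|] ->; rewrite ?hA_lift ?hA_max ?val_lift_max //.
  + exact: H5.
  + move=> _; rewrite minabs1 absn_x.
    have /set0Pn [z zi] := H1 i'.
    apply: leq_trans (minabs_le zi) _; apply: absn_T.
    by move: (H4 _ _ zi); rewrite inT' => /andP [].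
  + by rewrite /= leqNgt ltn_ord.
Qed.

Lemma hA_back k (pi : {ffun 'I_k -> {set sgn n}}) s :
  ssp_spec T (hA pi s) -> ssp_spec T' pi.
Proof.
case=> H1 H2 H3 [H4 H4'] H5.
have Nx : forall j y, y \in pi j -> y.2 != x.
  move=> j y yj; apply/negP => /eqP yx.
  have yj' : y \in hA pi s (lift ord_max j) by rewrite hA_lift.
  case: (eqVneq y.1 s) => [e|ne].
    have ym : y \in hA pi s ord_max by rewrite hA_max (sgnE y) e yx set11.
    by move: (H2 _ _ _ yj' ym) => /eqP; rewrite eq_sym (negbTE (neq_lift _ _)).
  apply: (H3 _ ord_max _ yj'); rewrite hA_max /negs yx; apply/set1P; congr (_, _).
  by move: ne; case: (y.1); case: (s).
split.
- by move=> i; move: (H1 (lift ord_max i)); rewrite hA_lift.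
- move=> i j y yi yj; apply: (@lift_inj _ ord_max).
  by apply: (H2 _ _ y); rewrite hA_lift.
- by move=> i j y yi yj; apply: (H3 (lift ord_max i) (lift ord_max j) y); rewrite hA_lift.
- split.
    move=> j y yj; rewrite inT' (Nx _ _ yj) /=.
    by apply: (H4 (lift ord_max j)); rewrite hA_lift.
  move=> e; rewrite inT' => /andP [ex eT]; have [i [b se]] := H4' e eT.
  move: se; case: (unliftP ord_max i) => [i'|] ->; rewrite ?hA_lift ?hA_max.
    by move=> se; exists i', b.
  by move=> /set1P [_ E]; move: ex; rewrite E eqxx.
- move=> i j ij; move: (H5 (lift ord_max i) (lift ord_max j)); rewrite !hA_lift; apply.
  by rewrite !val_lift_max.
Qed.

Lemma sumw_hA k (pi : {ffun 'I_k -> {set sgn n}}) s :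
  sumw (hA pi s) = (sumw pi + k.+1)%N.
Proof.
rewrite /sumw big_ord_recr /= hA_max cards1 muln1; congr (_ + _)%N.
apply: eq_bigr => i _.
have -> : widen_ord (leqnSn k) i = lift ord_max i by apply: ord_inj; rewrite lift_max.
by rewrite hA_lift.
Qed.

Lemma exists_hA k (pi : {ffun 'I_k -> {set sgn n}}) s y :
  [exists i, y \in hA pi s i] = [exists i, y \in pi i] || (y == (s, x)).
Proof.
apply/existsP/orP => [[i]|[/existsP [i yi]|/eqP ->]].
- case: (unliftP ord_max i) => [i'|] ->; rewrite ?hA_lift ?hA_max.
    by move=> yi; left; apply/existsP; exists i'.
  by move=> /set1P ->; right.
- by exists (lift ord_max i); rewrite hA_lift.
- by exists ord_max; rewrite hA_max set11.
Qed.

Lemma pos_hA k (pi : {ffun 'I_k -> {set sgn n}}) s :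
  ssp_spec T' pi -> pos (hA pi s) = (pos pi + s)%N.
Proof.
move=> S; have Sx := spec_x S; rewrite /pos.
have N : [exists i, (true, x) \in pi i] = false.
  by apply/negbTE; rewrite negb_exists; apply/forallP => i; apply/negP => /Sx; rewrite eqxx.
case: s.
  have -> : [set y : sgn n | y.1 & [exists i, y \in hA pi true i]] =
            (true, x) |: [set y : sgn n | y.1 & [exists i, y \in pi i]].
    apply/setP => y; rewrite !inE exists_hA.
    by case: (y =P (true, x)) => [->|_]; rewrite ?N ?orbF ?andbT.
  by rewrite cardsU1 inE N addn1 add1n.
have -> : [set y : sgn n | y.1 & [exists i, y \in hA pi false i]] =
          [set y : sgn n | y.1 & [exists i, y \in pi i]].
  apply/setP => y; rewrite !inE exists_hA.
  by case: (y =P (false, x)) => [->|_]; rewrite ?orbF.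
by rewrite addn0.
Qed.

Lemma mstat_hA k (pi : {ffun 'I_k -> {set sgn n}}) s :
  ssp_spec T' pi -> mstat (hA pi s) = (mstat pi + (2 * k.+1 - s))%N.
Proof.
move=> S; rewrite !mstatE sumw_hA pos_hA //.
have := pos_le pi; case: s => /=; lia.
Qed.

End Step.
End Comb.

End P2.
Import P2.

Module P3.
Import GRing.Theory.
Set Implicit Arguments. Unset Strict Implicit. Unset Printing Implicit Defensive.
Local Open Scope ring_scope.

Section Rec.
Variables (R : fieldType) (q : R) (n : nat).

Definition Fs k (T : {set 'I_n}) :=
  \sum_(pi : {ffun 'I_k -> {set sgn n}} | is_ssp T pi) q ^+ mstat pi.

Variables (T : {set 'I_n}) (x : 'I_n).
Hypothesis xT : x \in T.
Hypothesis xmax : forall e, e \in T -> (val e <= val x)%N.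

Lemma Fs_rec k : Fs k.+1 T =
  q ^+ (2 * k + 1) * (1 + q) * Fs k (T :\ x) + q * (1 + q) * qint (q ^+ 2) k.+1 * Fs k.+1 (T :\ x).
Proof.
rewrite /Fs (bigID (@caseA n x k)) /=; congr (_ + _).
  rewrite (reindex_onto (fun j : {ffun 'I_k -> {set sgn n}} * bool => hA x j.1 j.2) (@h'A n x k)) /=; last first.
    by move=> pi /andP [_ A]; rewrite hA_rem.
  rewrite (eq_bigl (fun j : {ffun 'I_k -> {set sgn n}} * bool => is_ssp (T :\ x) j.1 && xpredT j.2)); last first.
    move=> [pi s] /=; rewrite hA_K eqxx andbT hA_caseA andbT.
    rewrite andbT; apply/sspP/sspP; [exact: hA_back | exact: hA_spec].
  rewrite -(pair_big (fun pi => is_ssp (T :\ x) pi) xpredT (fun pi s => q ^+ mstat (hA x pi s))) /=.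
  rewrite mulr_sumr; apply: eq_bigr => pi /sspP S.
  rewrite big_bool /= !(mstat_hA xT) // !exprD.
  have -> : (2 * k.+1 - true = 2 * k + 1)%N by lia.
  have -> : (2 * k.+1 - false = (2 * k + 1).+1)%N by lia.
  rewrite [q ^+ (2 * k + 1).+1]exprS; set t := q ^+ (2 * k + 1); set u := q ^+ mstat pi; rewrite (_ : q ^+ k * (q ^+ k * q ^+ 0) * q ^+ 1 = t); first ring. by rewrite /t -!exprD; congr (_ ^+ _); lia.
rewrite (reindex_onto (fun j : {ffun 'I_k.+1 -> {set sgn n}} * ('I_k.+1 * bool) => hB x j.1 j.2) (@h'B n x k)) /=; last first.
  by move=> pi /andP [/sspP S _]; rewrite (hB_rem xT).
rewrite (eq_bigl (fun j : {ffun 'I_k.+1 -> {set sgn n}} * ('I_k.+1 * bool) => is_ssp (T :\ x) j.1 && xpredT j.2)); last first.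
  move=> [pi p] /=; rewrite andbT; apply/idP/idP.
    move=> /andP [/andP [/sspP S NA] /eqP E].
    have := remB_spec xmax S NA; rewrite (_ : remB x _ = pi) => [/sspP //|].
    by have := congr1 fst E.
  move=> /sspP S; rewrite (hB_K (T:=T)) // eqxx andbT (hB_notA (T:=T)) // andbT.
  by apply/sspP; exact: (hB_spec (T:=T)).
rewrite -(pair_big (fun pi => is_ssp (T :\ x) pi) xpredT (fun pi p => q ^+ mstat (hB x pi p))) /=.
rewrite mulr_sumr; apply: eq_bigr => pi /sspP S.
under eq_bigr => p _ do rewrite (mstat_hB xT) // exprD.
rewrite -mulr_sumr mulrC; congr (_ * _).
rewrite -(pair_big xpredT xpredT (fun (i : 'I_k.+1) (b : bool) => q ^+ (2 * (val i).+1 - b))) /=.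
rewrite /qint !mulr_sumr; apply: eq_bigr => i _.
rewrite big_bool /=.
have -> : (2 * i.+1 - true = 2 * i + 1)%N by lia.
have -> : (2 * i.+1 - false = (2 * i + 1).+1)%N by lia.
rewrite exprS exprD -exprM; ring.
Qed.

End Rec.

End P3.
Import P3.

Module P4.
Import GRing.Theory.
Set Implicit Arguments. Unset Strict Implicit. Unset Printing Implicit Defensive.
Local Open Scope ring_scope.

Section Form.
Variables (R : fieldType) (q : R) (n : nat).

Definition cF k t := q ^+ (k * k) * qint q 2 ^+ k * (q * qint q 2) ^+ (t - k) * qS (q ^+ 2) t k.

Lemma Fs_k0 (T : {set 'I_n}) : Fs q 0 T = (T == set0)%:R.
Proof.
pose p0 : {ffun 'I_0 -> {set sgn n}} := [ffun i => set0].
have U : forall pi : {ffun 'I_0 -> {set sgn n}}, pi = p0 by move=> pi; apply/ffunP => [[]].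
have E : forall pi : {ffun 'I_0 -> {set sgn n}}, is_ssp T pi = (T == set0) && (pi == p0).
  move=> pi; rewrite (U pi) eqxx andbT; apply/sspP/eqP.
    case=> _ _ _ [_ H4'] _; apply/setP => e; rewrite inE; apply/negP => /H4' [[]] //.
  move=> ->; split; try by case.
  split; first by case.
  by move=> e; rewrite inE.
rewrite /Fs (eq_bigl _ _ E); case: eqP => _ /=; last by rewrite big_pred0.
rewrite big_pred1_eq /mstat /sumw big_ord0 /pos.
rewrite (_ : [set y : sgn n | y.1 & [exists i, y \in p0 i]] = set0) ?cards0 //.
by apply/setP => y; rewrite !inE; apply/negP => /andP [_ /existsP [[]]].
Qed.

Lemma Fs_set0 k : Fs q k.+1 (set0 : {set 'I_n}) = 0.
Proof.
rewrite /Fs big_pred0 // => pi; apply/negP => /sspP [H1 _ _ [H4 _] _].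
have /set0Pn [y yi] := H1 ord0.
by move: (H4 _ _ yi); rewrite inE.
Qed.

Lemma Fs_formula t : forall (T : {set 'I_n}) k, #|T| = t -> Fs q k T = cF k t.
Proof.
rewrite /cF; elim: t => [|t IH] T k HT.
  move: HT => /cards0_eq ->.
  case: k => [|k]; first by rewrite Fs_k0 eqxx /= !expr0 !mul1r.
  by rewrite Fs_set0 /= mulr0.
have [x0 x0T] : exists x0, x0 \in T by apply/set0Pn; rewrite -card_gt0 HT.
case: (arg_maxnP (fun e : 'I_n => val e) x0T) => x xT xmax.
have {}xT : x \in T := xT.
have {}xmax : forall e, e \in T -> (val e <= val x)%N := xmax.
have HT' : #|T :\ x| = t by move: HT; rewrite (cardsD1 x) xT add1n => [[]].
case: k => [|k].
  rewrite Fs_k0; case: eqP => [E|_]; first by move: x0T; rewrite E inE.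
  by rewrite /= /qint big_ord0 mul0r addr0 mulr0.
rewrite (Fs_rec q xT xmax) !IH // qSS.
rewrite qint2.
have Eq : q ^+ (k.+1 * k.+1) = q ^+ (2 * k + 1) * q ^+ (k * k) by rewrite -exprD; congr (_ ^+ _); lia.
rewrite Eq subSS.
case: (leqP t k) => tk.
  rewrite [qS _ t k.+1]qS_gt ?ltnS // !mulr0 [(1 + q) ^+ k.+1]exprS.
  set e1 := q ^+ (2 * k + 1); set e2 := q ^+ (k * k); set e3 := (1 + q) ^+ k.
  set e4 := (q * (1 + q)) ^+ (t - k); set s := qS _ t k; ring.
rewrite (_ : (t - k = (t - k.+1).+1)%N); last by lia.
rewrite [(1 + q) ^+ k.+1]exprS [(q * (1 + q)) ^+ (t - k.+1).+1]exprS.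
set e1 := q ^+ (2 * k + 1); set e2 := q ^+ (k * k); set e3 := (1 + q) ^+ k.
set e4 := (q * (1 + q)) ^+ (t - k.+1); set s := qS _ t k; set s' := qS _ t k.+1.
set Q := qint _ k.+1; ring.
Qed.

End Form.

End P4.
Import P4.

Module P5.
Import GRing.Theory.
Set Implicit Arguments. Unset Strict Implicit. Unset Printing Implicit Defensive.
Local Open Scope ring_scope.

Section Final.
Variables (R : fieldType) (q : R) (n : nat).

Definition Tof k (pi : {ffun 'I_k -> {set sgn n}}) : {set 'I_n} :=
  [set e | [exists i, ((true, e) \in pi i) || ((false, e) \in pi i)]].

Lemma ssp_Tof k T (pi : {ffun 'I_k -> {set sgn n}}) : is_ssp T pi -> Tof pi = T.
Proof.
move=> /sspP [_ _ _ [H4 H4'] _]; apply/setP => e; rewrite inE.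
apply/existsP/idP => [[i /orP [] /H4 //]|/H4' [i [s se]]].
by exists i; case: s se => ->; rewrite ?orbT.
Qed.

Definition condD (T : {set 'I_n}) := [forall i : 'I_n, T != [set: 'I_n] :\ i].

Lemma sumD_T k : \sum_(pi : {ffun 'I_k -> {set sgn n}} | is_D pi) q ^+ mstat pi =
  \sum_(T | condD T) Fs q k T.
Proof.
rewrite (partition_big (@Tof k) condD).
  apply: eq_bigr => T cT; apply: eq_bigl => pi.
  apply/idP/idP.
    move=> /andP [/andP [/existsP [T0 H0] _] /eqP E].
    by rewrite -E (ssp_Tof H0).
  move=> H; rewrite (ssp_Tof H) eqxx andbT /is_D.
  apply/andP; split; first by apply/existsP; exists T.
  apply/forallP => i; apply/negP => Hi.
  by move: cT => /forallP /(_ i); rewrite -(ssp_Tof H) (ssp_Tof Hi) eqxx.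
move=> pi /andP [/existsP [T0 H0] /forallP HD].
apply/forallP => i; rewrite (ssp_Tof H0); apply/negP => /eqP E.
by move: (HD i); rewrite -E H0.
Qed.

Lemma sum_card (g : nat -> R) :
  \sum_(T : {set 'I_n}) g #|T| = \sum_(t < n.+1) 'C(n, t)%:R * g t.
Proof.
have lt : forall T : {set 'I_n}, (#|T| < n.+1)%N.
  by move=> T; rewrite ltnS; have := max_card T; rewrite card_ord.
rewrite (eq_bigr (fun T : {set 'I_n} => \sum_(t < n.+1 | #|T| == t) g t)); last first.
  move=> T _; rewrite (big_pred1 (inord #|T|)) ?inordK //.
  by move=> t /=; rewrite -(inj_eq val_inj) /= inordK // eq_sym.
rewrite (exchange_big_dep xpredT) //=.
apply: eq_bigr => t _; rewrite sumr_const mulr_natl; congr (_ *+ _).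
have H := card_draws 'I_n t; rewrite card_ord in H; rewrite -H.
by apply: eq_card => T; rewrite !inE.
Qed.

Lemma sum_notD (g : nat -> R) :
  \sum_(T : {set 'I_n} | ~~ condD T) g #|T| = n%:R * g n.-1.
Proof.
have inj : {in [set: 'I_n] &, injective (fun i : 'I_n => [set: 'I_n] :\ i)}.
  move=> i j _ _ E; apply/eqP; apply/negPn/negP => ij.
  by move: (setD11 j [set: 'I_n]); rewrite -E !inE eq_sym ij.
rewrite (eq_bigl (mem [set [set: 'I_n] :\ i | i in [set: 'I_n]])); last first.
  move=> T /=; rewrite /condD negb_forall; apply/existsP/imsetP.
    by case=> i /negPn /eqP ->; exists i; rewrite ?inE.
  by case=> i _ ->; exists i; rewrite eqxx.
have C : forall i : 'I_n, #|[set: 'I_n] :\ i| = n.-1.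
  move=> i; have := cardsD1 i [set: 'I_n]; rewrite cardsT inE /= add1n card_ord.
  by move: #|_| => c ->.
rewrite big_imset //= (eq_bigr (fun _ => g n.-1)); last by move=> i _; rewrite C.
by rewrite sumr_const cardsT card_ord mulr_natl.
Qed.

End Final.

End P5.
Import P5.

Local Open Scope ring_scope.


Theorem proposition3p3 (R : fieldType) (q : R) (hq0 : q != 0) (hq2 : qint q 2 != 0)
  (n k : nat) (hkn : (k <= n)%N) :
  qSB q n k =
    \sum_(k <= j < n.+1) 'C(n, j)%:R * qint q 2 ^+ (j - k) * q ^+ (j - k) * qS (q ^+ 2) j k
  /\
  qSB q n k =
    SD q n k + n%:R * qint q 2 ^ (n%:Z - k%:Z - 1) * q ^ (n%:Z - k%:Z - 1)
                 * qS (q ^+ 2) n.-1 k.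
Proof.
split.
  rewrite qSB_Tn /Tn.
  transitivity (\sum_(0 <= j < n.+1) 'C(n, j)%:R * (q * qint q 2) ^+ (j - k) * qS (q ^+ 2) j k).
    by rewrite big_mkord.
  rewrite (@big_cat_nat _ _ _ k) //=; last by lia.
  rewrite big_nat_cond big1 ?add0r; last first.
    by move=> j /andP [/andP [_ jk] _]; rewrite qS_gt // mulr0.
  by apply: eq_bigr => j _; rewrite exprMn [q ^+ _ * _]mulrC mulrA.
set P := q ^+ (k * k) * qint q 2 ^+ k.
have P0 : P != 0 by rewrite mulf_neq0 // expf_neq0.
have E1 : \sum_(t < n.+1) 'C(n, t)%:R * cF q k t = P * Tn _ q n k.
  rewrite /Tn mulr_sumr; apply: eq_bigr => t _; rewrite /cF -/P.
  set A := (q * _) ^+ _; set S := qS _ _ _; ring.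
have E2 : cF q k n.-1 = P * ((q * qint q 2) ^+ (n.-1 - k) * qS (q ^+ 2) n.-1 k).
  rewrite /cF -/P; set A := (q * _) ^+ _; set S := qS _ _ _; ring.
have ESD : SD q n k = Tn _ q n k - n%:R * ((q * qint q 2) ^+ (n.-1 - k) * qS (q ^+ 2) n.-1 k).
  rewrite /SD sumD_T.
  rewrite (eq_bigr (fun T : {set 'I_n} => cF q k #|T|)); last by move=> T _; exact: Fs_formula.
  have H : \sum_(T : {set 'I_n}) cF q k #|T| =
     \sum_(T : {set 'I_n} | condD T) cF q k #|T| + \sum_(T : {set 'I_n} | ~~ condD T) cF q k #|T|.
    by rewrite (bigID (@condD n)) /=.
  rewrite (@sum_card _ n (cF q k)) (@sum_notD _ n (cF q k)) in H.
  have -> : \sum_(T : {set 'I_n} | condD T) cF q k #|T| =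
            \sum_(t < n.+1) 'C(n, t)%:R * cF q k t - n%:R * cF q k n.-1.
    by rewrite H addrK.
  rewrite E1 E2 -/P; field; exact: P0.
rewrite ESD qSB_Tn.
suff -> : n%:R * qint q 2 ^ (n%:Z - k%:Z - 1) * q ^ (n%:Z - k%:Z - 1) * qS (q ^+ 2) n.-1 k =
          n%:R * ((q * qint q 2) ^+ (n.-1 - k) * qS (q ^+ 2) n.-1 k) by rewrite subrK.
case: (ltnP k n) => kn.
  have -> : (n%:Z - k%:Z - 1 = (n.-1 - k)%N%:Z)%R by lia.
  by rewrite -!exprnP exprMn [q ^+ _ * _]mulrC !mulrA.
have Ekn : k = n by lia.
case: n hkn kn Ekn {ESD E1 E2} => [|m] _ _ Ekn; first by rewrite !mul0r.
by rewrite [qS _ m.+1.-1 k]qS_gt ?Ekn // !mulr0.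
Qed.
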